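(* Let $\sigma^2>0$, $x_2>0$, $x\ge0$, and $a_1,a_2\in(0,1)$ with $a_1+a_2=1$, and define $\alpha,\beta,J(x)$ as in the context. Then (for every value $\beta>0$, in particular including $\beta\ge1$) $$J(x) = -\frac{x^2+\sigma^2}{x_2^2+\sigma^2} + \log\frac{a_2}{x_2^2+\sigma^2} + \log\bigl(1+\beta^{-1}\bigr) - \frac{\alpha\beta^{-1}}{\alpha+1}\, {}_2F_1\!\left(1, \tfrac{\alpha+1}{\alpha}; \tfrac{2\alpha+1}{\alpha}; -\beta^{-1}\right).$$
   Context: Logarithms are natural. Set $$\alpha = \frac{x_2^2}{x_2^2+\sigma^2}\cdot\frac{x^2+\sigma^2}{\sigma^2}, \qquad \beta = \frac{a_2}{a_1}\cdot\frac{\sigma^2}{x_2^2+\sigma^2},$$ both strictly positive, and $$J(x) = \int_0^\infty \frac{2y}{x^2+\sigma^2}\, e^{-y^2/(x^2+\sigma^2)} \log\!\left( \frac{a_1}{\sigma^2} e^{-y^2/\sigma^2} + \frac{a_2}{x_2^2+\sigma^2} e^{-y^2/(x_2^2+\sigma^2)} \right) dy.$$ ${}_2F_1(\xi_1,\xi_2;\eta_1;z)$ denotes the Gauss hypergeometric function: for $|z|<1$ it equals $\sum_{k\ge0}\frac{(\xi_1)_k(\xi_2)_k}{(\eta_1)_k}\frac{z^k}{k!}$ with $(a)_k=a(a+1)\cdots(a+k-1)$, and it is extended to $z\in\mathbb{C}\setminus(1,\infty)$ by analytic continuation. *)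

(* Defs.v *)
From Stdlib Require Import Reals ClassicalEpsilon.
From Coquelicot Require Import Coquelicot.
Open Scope R_scope.

Fixpoint poch (a : R) (k : nat) : R :=
  match k with
  | O => 1
  | S k' => poch a k' * (a + INR k')
  end.

Definition hyp2F1_coef (a b c : R) (k : nat) : R :=
  poch a k * poch b k / (poch c k * INR (Factorial.fact k)).

Definition real_analytic_on (D : R -> Prop) (F : R -> R) : Prop :=
  forall x0, D x0 ->
    exists r, 0 < r /\ exists cf : nat -> R,
      forall x, Rabs (x - x0) < r -> is_series (fun k => cf k * (x - x0) ^ k) (F x).

(* F is the analytic continuation of 2F1(a,b;c;.) along the real axis
   (-oo,1): real-analytic on (-oo,1) and equal to the series on (-1,1). *)
Definition is_hyp2F1_cont (a b c : R) (F : R -> R) : Prop :=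
  real_analytic_on (fun z => z < 1) F /\
  forall z, -1 < z < 1 -> is_series (fun k => hyp2F1_coef a b c k * z ^ k) (F z).

(* Gauss hypergeometric function for real z < 1 (the value of the
   analytic continuation; junk value for z >= 1 or if none exists). *)
Definition hyp2F1 (a b c z : R) : R :=
  epsilon (inhabits (fun _ : R => 0)) (is_hyp2F1_cont a b c) z.

Definition alpha (sigma2 x2 x : R) : R :=
  (x2 ^ 2 / (x2 ^ 2 + sigma2)) * ((x ^ 2 + sigma2) / sigma2).

Definition beta (sigma2 x2 a1 a2 : R) : R :=
  (a2 / a1) * (sigma2 / (x2 ^ 2 + sigma2)).

Definition J_integrand (sigma2 x2 a1 a2 x : R) (y : R) : R :=
  2 * y / (x ^ 2 + sigma2) * exp (- y ^ 2 / (x ^ 2 + sigma2)) *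
  ln (a1 / sigma2 * exp (- y ^ 2 / sigma2)
      + a2 / (x2 ^ 2 + sigma2) * exp (- y ^ 2 / (x2 ^ 2 + sigma2))).

(* Main.v *)
Require Import Defs.
From Stdlib Require Import Reals Lra ClassicalEpsilon Classical.
From Coquelicot Require Import Coquelicot.
Open Scope R_scope.

Lemma ballR (x e y : R) : ball x e y <-> Rabs (y - x) < e.
Proof. reflexivity. Qed.
Lemma ballR1 (x e y : R) : ball x e y -> Rabs (y - x) < e.
Proof. intros H; exact H. Qed.
Lemma ballR2 (x e y : R) : Rabs (y - x) < e -> ball x e y.
Proof. intros H; exact H. Qed.

Definition pw (p v : R) : R := if Rlt_dec 0 v then exp (p * ln v) else 0.

Lemma pw_pos p v : 0 < v -> pw p v = exp (p * ln v).
Proof. intros H; unfold pw; destruct (Rlt_dec 0 v); [reflexivity|lra]. Qed.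

Lemma pw_npos p v : v <= 0 -> pw p v = 0.
Proof. intros H; unfold pw; destruct (Rlt_dec 0 v); [lra|reflexivity]. Qed.

Lemma pw_bnd p v : 0 < p -> v <= 1 -> 0 <= pw p v <= 1.
Proof.
  intros hp hv; destruct (Rlt_dec 0 v) as [h|h].
  - rewrite pw_pos by lra. split. left; apply exp_pos.
    rewrite <- exp_0. destruct (Req_dec v 1) as [->|h1].
    + rewrite ln_1, Rmult_0_r; lra.
    + left; apply exp_increasing. assert (ln v < 0).
      { rewrite <- ln_1. apply ln_increasing; lra. }
      nra.
  - rewrite pw_npos by lra; lra.
Qed.

Lemma pw_cont p v : 0 < p -> continuous (pw p) v.
Proof.
  intros hp.
  destruct (Rlt_dec 0 v) as [h|h].
  - apply continuous_ext_loc with (g := fun y => exp (p * ln y)).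
    + exists (mkposreal v h). intros y Hy. apply ballR1 in Hy; cbn [pos] in Hy.
      rewrite pw_pos. reflexivity. apply Rabs_def2 in Hy. destruct Hy; lra.
    + apply (ex_derive_continuous (K:=R_AbsRing) (V:=R_NormedModule)). auto_derive. lra.
  - destruct (Rlt_dec v 0) as [h'|h'].
    + apply continuous_ext_loc with (g := fun _ => 0).
      * exists (mkposreal (-v) ltac:(lra)). intros y Hy. apply ballR1 in Hy; cbn [pos] in Hy.
        apply Rabs_def2 in Hy. rewrite pw_npos; lra.
      * apply continuous_const.
    + assert (v = 0) by lra. subst v.
      intros P [eps Heps]. rewrite pw_npos in Heps by lra.
      assert (he: 0 < exp (ln eps / p)) by apply exp_pos.
      exists (mkposreal _ he). intros y Hy. apply Heps. apply ballR1 in Hy. apply ballR2. simpl in *.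
      rewrite Rminus_0_r in Hy. rewrite Rminus_0_r.
      destruct (Rlt_dec 0 y) as [hy|hy].
      * rewrite pw_pos by lra. rewrite Rabs_pos_eq by (left; apply exp_pos).
        rewrite Rabs_pos_eq in Hy by lra.
        rewrite <- (exp_ln eps) by apply cond_pos.
        apply exp_increasing.
        assert (H0 : ln y < ln eps / p).
        { rewrite <- (ln_exp (ln eps / p)). apply ln_increasing; lra. }
        apply Rmult_lt_compat_l with (r := p) in H0; [|lra].
        replace (p * (ln eps / p)) with (ln eps) in H0 by (field; lra). lra.
      * rewrite pw_npos by lra. rewrite Rabs_R0. apply cond_pos.
Qed.

Lemma pw_mul_pow p v k : 0 < p -> pw p v * v ^ k = pw (p + INR k) v.
Proof.
  intros hp. destruct (Rlt_dec 0 v) as [h|h].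
  - rewrite !pw_pos by lra. rewrite <- (Rpower_pow k v h). unfold Rpower.
    rewrite <- exp_plus. f_equal. ring.
  - rewrite !pw_npos by lra. ring.
Qed.

Lemma pw_derive r v : 0 < v -> is_derive (pw (r + 1)) v ((r + 1) * pw r v).
Proof.
  intros h. apply is_derive_ext_loc with (f := fun y => exp ((r+1) * ln y)).
  - exists (mkposreal v h). intros y Hy. apply ballR1 in Hy; cbn [pos] in Hy.
    apply Rabs_def2 in Hy. rewrite pw_pos; [reflexivity|lra].
  - rewrite (pw_pos r v h). auto_derive. lra.
    replace ((r+1) * ln v) with (r * ln v + ln v) by ring.
    rewrite exp_plus, exp_ln by lra. field. lra.
Qed.

Definition cont01 (f : R -> R) := forall x, 0 <= x <= 1 -> continuous f x.

Lemma cont_sub f a b : cont01 f -> 0 <= a <= b -> b <= 1 ->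
  forall x, Rmin a b <= x <= Rmax a b -> continuous f x.
Proof.
  intros hf ha hb x hx. rewrite Rmin_left, Rmax_right in hx by lra. apply hf; lra.
Qed.

Lemma ex_sub f a b : cont01 f -> 0 <= a <= b -> b <= 1 -> ex_RInt f a b.
Proof. intros; apply (ex_RInt_continuous (V:=R_CompleteNormedModule)), cont_sub; auto. Qed.

Lemma RInt_tail f M e : cont01 f -> (forall x, 0 <= x <= 1 -> Rabs (f x) <= M) ->
  0 <= e <= 1 -> Rabs (RInt f 0 1 - RInt f e 1) <= e * M.
Proof.
  intros hf hM he.
  assert (E : RInt f 0 1 = RInt f 0 e + RInt f e 1).
  { rewrite <- (RInt_Chasles f 0 e 1) by (apply ex_sub; auto; lra). reflexivity. }
  rewrite E.
  replace (RInt f 0 e + RInt f e 1 - RInt f e 1) with (RInt f 0 e) by lra.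
  replace (e * M) with ((e - 0) * M) by ring.
  apply abs_RInt_le_const. lra. apply ex_sub; auto; lra.
  intros t ht; apply hM; lra.
Qed.

Lemma squeeze_eq x y K : (forall e, 0 < e < 1 -> Rabs (x - y) <= K * e) -> x = y.
Proof.
  intros H. destruct (Req_dec x y) as [h|h]; auto. exfalso.
  assert (hd : 0 < Rabs (x - y)) by (apply Rabs_pos_lt; lra).
  set (e := Rmin (/2) (Rabs (x - y) / (2 * (Rabs K + 1)))).
  assert (he1 : 0 < e). { unfold e; apply Rmin_pos. lra. apply Rdiv_lt_0_compat. lra.
    pose proof (Rabs_pos K); lra. }
  assert (he2 : e <= Rabs (x - y) / (2 * (Rabs K + 1))) by apply Rmin_r.
  assert (he3 : e <= /2) by apply Rmin_l.
  specialize (H e ltac:(lra)).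
  pose proof (Rle_abs K) as hK. pose proof (Rabs_pos K).
  assert (K * e <= Rabs K * e) by nra.
  assert (e * (2 * (Rabs K + 1)) <= Rabs (x - y)).
  { apply Rmult_le_compat_r with (r := 2 * (Rabs K + 1)) in he2; [|lra].
    replace (Rabs (x - y) / (2 * (Rabs K + 1)) * (2 * (Rabs K + 1))) with (Rabs (x-y)) in he2 by (field; lra). lra. }
  nra.
Qed.

Lemma pw_cont01 p : 0 < p -> cont01 (pw p).
Proof. intros hp x _; apply pw_cont; auto. Qed.

Lemma pw_succ p v : 0 < p -> pw (p + 1) v = v * pw p v.
Proof. intros hp. replace (p + 1) with (p + INR 1) by (simpl; ring). rewrite <- (pw_mul_pow p v 1) by auto. simpl; ring. Qed.

Lemma int_pw r : 0 < r -> RInt (pw r) 0 1 = 1 / (r + 1).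
Proof.
  intros hr. apply squeeze_eq with (K := 2).
  intros e he.
  assert (HI : RInt (pw r) e 1 = (1 - pw (r+1) e) / (r + 1)).
  { apply is_RInt_unique.
    assert (H := is_RInt_derive (fun v => / (r+1) * pw (r+1) v) (pw r) e 1).
    replace ((1 - pw (r + 1) e) / (r + 1)) with
      (minus (/ (r+1) * pw (r+1) 1) (/ (r+1) * pw (r+1) e)).
    apply H.
    - intros x hx. rewrite Rmin_left, Rmax_right in hx by lra.
      replace (pw r x) with (/ (r+1) * ((r+1) * pw r x)) by (field; lra).
      apply is_derive_scal. apply pw_derive. lra.
    - intros x hx. apply pw_cont; auto.
    - rewrite (pw_pos _ 1) by lra. rewrite ln_1, Rmult_0_r, exp_0.
      unfold minus, plus, opp; simpl. field. lra. }
  pose proof (RInt_tail (pw r) 1 e (pw_cont01 r hr)) as T.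
  assert (hb : forall x, 0 <= x <= 1 -> Rabs (pw r x) <= 1).
  { intros x hx. pose proof (pw_bnd r x hr ltac:(lra)). rewrite Rabs_pos_eq; lra. }
  specialize (T hb ltac:(lra)). rewrite HI in T.
  rewrite pw_succ in T by auto.
  pose proof (pw_bnd r e hr ltac:(lra)).
  assert (0 <= e * pw r e / (r + 1) <= e).
  { split. apply Rdiv_le_0_compat; nra.
    apply Rmult_le_reg_r with (r + 1). lra. unfold Rdiv. rewrite Rmult_assoc, Rinv_l by lra. nra. }
  replace (RInt (pw r) 0 1 - 1 / (r + 1)) with
    ((RInt (pw r) 0 1 - (1 - e * pw r e) / (r + 1)) - e * pw r e / (r+1)) by (field; lra).
  eapply Rle_trans. apply Rabs_triang. rewrite Rabs_Ropp.
  rewrite (Rabs_pos_eq (e * pw r e / (r + 1))) by lra. lra.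
Qed.

Lemma cont_pw_mul p g : 0 < p -> (forall v, 0 <= v <= 1 -> ex_derive g v) ->
  cont01 (fun v => pw p v * g v).
Proof.
  intros hp hg v hv.
  apply (continuous_mult (K:=R_AbsRing) (pw p) g).
  apply pw_cont; auto.
  apply (ex_derive_continuous (K:=R_AbsRing) (V:=R_NormedModule)). auto.
Qed.

Definition G (p z : R) := (1 + p) * RInt (fun v => pw p v * / (1 - z * v)) 0 1.
Definition cf (p z0 : R) (k : nat) :=
  (1 + p) * RInt (fun v => pw p v * (v ^ k / (1 - z0 * v) ^ (S k))) 0 1.
Definition mm (z0 : R) := Rmin 1 (1 - z0).

Lemma mm_pos z0 : z0 < 1 -> 0 < mm z0.
Proof. intros; unfold mm; apply Rmin_pos; lra. Qed.

Lemma mm_le z0 v : z0 < 1 -> 0 <= v <= 1 -> mm z0 <= 1 - z0 * v.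
Proof.
  intros h hv. unfold mm. destruct (Rle_dec z0 0).
  - eapply Rle_trans. apply Rmin_l. nra.
  - eapply Rle_trans. apply Rmin_r. nra.
Qed.

Lemma pow_frac a b c n : c <> 0 -> (a * b / c) ^ n = a ^ n * b ^ n / c ^ n.
Proof.
  intros hc. induction n; simpl. field. rewrite IHn. field. split; auto.
  apply pow_nonzero; auto.
Qed.

Section Expand.
Variables (p z0 z : R).
Hypothesis hp : 0 < p.
Hypothesis hz0 : z0 < 1.
Hypothesis hz : Rabs (z - z0) < mm z0.

Let d := z - z0.
Let w v := 1 - z0 * v.
Let u v := 1 - z * v.

Lemma w_ge v : 0 <= v <= 1 -> mm z0 <= w v.
Proof. intros; apply mm_le; auto. Qed.

Lemma u_ge v : 0 <= v <= 1 -> mm z0 - Rabs d <= u v.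
Proof.
  intros hv. pose proof (w_ge v hv). unfold u, w, d in *.
  pose proof (Rle_abs (z - z0)). replace (1 - z * v) with (1 - z0 * v - (z - z0) * v) by ring.
  assert ((z - z0) * v <= Rabs (z - z0)).
  { destruct (Rle_dec 0 (z - z0)). rewrite Rabs_pos_eq by lra. nra.
    pose proof (Rabs_pos (z - z0)); nra. }
  lra.
Qed.

Lemma w_pos v : 0 <= v <= 1 -> 0 < w v.
Proof. intros hv; pose proof (w_ge v hv); pose proof (mm_pos z0 hz0); lra. Qed.
Lemma u_pos v : 0 <= v <= 1 -> 0 < u v.
Proof. intros hv; pose proof (u_ge v hv); unfold d in *; lra. Qed.

Definition AN (N : nat) v := pw p v * (/ u v - (d * v / w v) ^ (S N) / u v).
Definition TK (k : nat) v := pw p v * (v ^ k / w v ^ (S k)).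

Lemma AN_cont N : cont01 (AN N).
Proof.
  apply cont_pw_mul; auto. intros v hv. pose proof (w_pos v hv). pose proof (u_pos v hv).
  unfold u, w in *. auto_derive. repeat split; lra.
Qed.
Lemma TK_cont k : cont01 (TK k).
Proof.
  apply cont_pw_mul; auto. intros v hv. pose proof (w_pos v hv).
  unfold w in *. auto_derive. apply Rmult_integral_contrapositive; split; [lra | apply pow_nonzero; lra].
Qed.

Lemma partial N :
  sum_n (fun k => d ^ k * RInt (TK k) 0 1) N = RInt (AN N) 0 1.
Proof.
  induction N.
  - rewrite sum_O. simpl pow at 1. rewrite Rmult_1_l.
    apply RInt_ext. intros x hx. rewrite Rmin_left, Rmax_right in hx by lra.
    assert (hv : 0 <= x <= 1) by lra. pose proof (w_pos x hv). pose proof (u_pos x hv).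
    unfold TK, AN. f_equal. unfold u, w, d in *. simpl. field. lra.
  - rewrite sum_Sn. change (plus ?a ?b) with (a + b). rewrite IHN.
    rewrite <- (RInt_scal (V:=R_CompleteNormedModule)) by (apply ex_sub; [apply TK_cont| lra|lra]).
    assert (E : RInt (AN N) 0 1 + RInt (fun x => scal (d ^ S N) (TK (S N) x)) 0 1
       = RInt (fun x => AN N x + scal (d ^ S N) (TK (S N) x)) 0 1).
    { rewrite (RInt_plus (V:=R_CompleteNormedModule)). reflexivity.
      apply ex_sub; [apply AN_cont|lra|lra].
      apply (ex_RInt_scal (V:=R_CompleteNormedModule)). apply ex_sub; [apply TK_cont|lra|lra]. }
    etransitivity. apply E. apply RInt_ext. intros x hx. rewrite Rmin_left, Rmax_right in hx by lra.
    assert (hv : 0 <= x <= 1) by lra. pose proof (w_pos x hv). pose proof (u_pos x hv).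
    unfold TK, AN, scal; simpl. unfold mult; simpl.
    change (pow (d * x / w x) (S (S N))) with ((d * x / w x) * (d * x / w x) ^ (S N)).
    rewrite !pow_frac by lra.
    change (w x ^ S (S N)) with (w x * w x ^ (S N)).
    assert (w x ^ S N <> 0) by (apply pow_nonzero; lra).
    unfold u, w, d in *. field. repeat split; try apply pow_nonzero; lra.
Qed.

Lemma rem_bound N v : 0 <= v <= 1 ->
  Rabs (pw p v * ((d * v / w v) ^ (S N) / u v)) <= (Rabs d / mm z0) ^ (S N) / (mm z0 - Rabs d).
Proof.
  intros hv. pose proof (w_ge v hv). pose proof (u_ge v hv). pose proof (mm_pos z0 hz0).
  pose proof (pw_bnd p v hp ltac:(lra)).
  assert (hd : Rabs d < mm z0) by exact hz.
  rewrite Rabs_mult, (Rabs_pos_eq (pw p v)) by lra.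
  change (Rabs ((d * v / w v) ^ S N / u v)) with (Rabs ((d * v / w v) ^ S N * / u v)).
  rewrite Rabs_mult, Rabs_inv, <- RPow_abs.
  rewrite (Rabs_pos_eq (u v)) by lra.
  assert (h1 : Rabs (d * v / w v) <= Rabs d / mm z0).
  { unfold Rdiv. rewrite !Rabs_mult, Rabs_inv, (Rabs_pos_eq v), (Rabs_pos_eq (w v)) by lra.
    pose proof (Rabs_pos d).
    apply Rmult_le_compat. nra. left; apply Rinv_0_lt_compat; lra. nra.
    apply Rinv_le_contravar; lra. }
  assert (h2 : Rabs (d * v / w v) ^ S N <= (Rabs d / mm z0) ^ S N).
  { apply pow_incr. split; auto. apply Rabs_pos. }
  assert (h3 : 0 <= Rabs (d * v / w v) ^ S N) by (apply pow_le, Rabs_pos).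
  assert (h4 : / u v <= / (mm z0 - Rabs d)) by (apply Rinv_le_contravar; lra).
  assert (h5 : 0 < / (mm z0 - Rabs d)) by (apply Rinv_0_lt_compat; lra).
  assert (0 < / u v) by (apply Rinv_0_lt_compat; lra).
  unfold Rdiv. 
  apply Rle_trans with (1 * (Rabs (d * v / w v) ^ S N * / u v)).
  apply Rmult_le_compat_r. nra. lra.
  rewrite Rmult_1_l. apply Rmult_le_compat; lra.
Qed.

Lemma expand : is_series (fun k => cf p z0 k * (z - z0) ^ k) (G p z).
Proof.
  set (rho := Rabs d / mm z0).
  pose proof (mm_pos z0 hz0) as hm.
  assert (hd : Rabs d < mm z0) by exact hz.
  assert (hrho : 0 <= rho < 1).
  { unfold rho; split. apply Rdiv_le_0_compat; [apply Rabs_pos|lra].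
    apply Rmult_lt_reg_r with (mm z0); auto. unfold Rdiv; rewrite Rmult_assoc, Rinv_l; lra. }
  set (C := (1 + p) / (mm z0 - Rabs d)).
  assert (hC : 0 < C) by (unfold C; apply Rdiv_lt_0_compat; lra).
  assert (HB : forall N, Rabs (G p z - sum_n (fun k => cf p z0 k * (z - z0) ^ k) N) <= C * rho ^ (S N)).
  { intros N.
    assert (ES : sum_n (fun k => cf p z0 k * (z - z0) ^ k) N = (1 + p) * RInt (AN N) 0 1).
    { rewrite <- partial.
      transitivity (sum_n (fun k => (1+p) * (d^k * RInt (TK k) 0 1)) N).
      apply sum_n_ext. intros k.
      change (cf p z0 k * (z - z0)^k = (1+p) * (d^k * RInt (TK k) 0 1)). unfold cf. fold d. unfold TK, w. ring.
      exact (sum_n_mult_l (K:=R_Ring) (1+p) _ N). }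
    rewrite ES. unfold G.
    assert (EM : RInt (fun v => pw p v * / (1 - z * v)) 0 1 - RInt (AN N) 0 1 =
                 RInt (fun v => pw p v * ((d * v / w v) ^ (S N) / u v)) 0 1).
    { rewrite <- (RInt_minus (V:=R_CompleteNormedModule)).
      apply RInt_ext. intros x hx. rewrite Rmin_left, Rmax_right in hx by lra.
      unfold AN, minus, plus, opp; simpl. unfold u. ring.
      apply ex_sub; [|lra|lra]. apply cont_pw_mul; auto. intros v hv. pose proof (u_pos v hv).
      unfold u in *. auto_derive. lra.
      apply ex_sub; [apply AN_cont|lra|lra]. }
    replace ((1 + p) * RInt (fun v => pw p v * / (1 - z * v)) 0 1 - (1 + p) * RInt (AN N) 0 1)
      with ((1 + p) * (RInt (fun v => pw p v * / (1 - z * v)) 0 1 - RInt (AN N) 0 1)) by lra.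
    rewrite EM. rewrite Rabs_mult, Rabs_pos_eq by lra.
    unfold C. unfold Rdiv. rewrite Rmult_assoc. apply Rmult_le_compat_l. lra.
    replace (/ (mm z0 - Rabs d) * rho ^ S N) with ((1 - 0) * (rho ^ S N / (mm z0 - Rabs d))) by (field; lra).
    apply abs_RInt_le_const. lra.
    apply ex_sub; [|lra|lra]. apply cont_pw_mul; auto. intros v hv. pose proof (u_pos v hv).
    pose proof (w_pos v hv). unfold u, w in *. auto_derive. lra.
    intros t ht. apply rem_bound. auto. }
  intros P [eps Heps].
  assert (hg := is_lim_seq_geom rho ltac:(rewrite Rabs_pos_eq; lra)).
  apply is_lim_seq_spec in hg.
  assert (he : 0 < eps / C) by (apply Rdiv_lt_0_compat; [apply cond_pos|auto]).
  destruct (hg (mkposreal _ he)) as [N0 HN0].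
  exists N0. intros n hn. apply Heps. apply ballR2.
  specialize (HN0 n hn). simpl in HN0. rewrite Rminus_0_r, Rabs_pos_eq in HN0 by (apply pow_le; lra).
  specialize (HB n). rewrite <- Rabs_Ropp in HB.
  replace (- (G p z - sum_n (fun k : nat => cf p z0 k * (z - z0) ^ k) n)) with
    (sum_n (fun k : nat => cf p z0 k * (z - z0) ^ k) n - G p z) in HB by lra.
  eapply Rle_lt_trans. apply HB. simpl.
  assert (rho * rho ^ n <= rho ^ n) by (pose proof (pow_le rho n ltac:(lra)); nra).
  apply Rle_lt_trans with (C * rho ^ n). nra.
  apply Rmult_lt_reg_r with (/ C). apply Rinv_0_lt_compat; auto.
  replace (C * rho ^ n * / C) with (rho ^ n) by (field; lra). exact HN0.
Qed.
End Expand.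

Lemma G_analytic p : 0 < p -> real_analytic_on (fun z => z < 1) (G p).
Proof.
  intros hp z0 hz0. exists (mm z0). split. apply mm_pos; auto.
  exists (cf p z0). intros z hz. apply expand; auto.
Qed.

Lemma poch1 k : poch 1 k = INR (Factorial.fact k).
Proof.
  induction k; simpl poch. simpl; reflexivity.
  rewrite IHk. change (Factorial.fact (S k)) with (S k * Factorial.fact k)%nat. rewrite mult_INR, S_INR. ring.
Qed.

Lemma poch_pos b k : 0 < b -> 0 < poch b k.
Proof.
  intros hb; induction k; simpl. lra. apply Rmult_lt_0_compat; auto. pose proof (pos_INR k); lra.
Qed.

Lemma poch_shift b k : poch b k * (b + INR k) = b * poch (b + 1) k.
Proof.
  induction k. simpl; ring.
  change (poch b (S k)) with (poch b k * (b + INR k)).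
  change (poch (b+1) (S k)) with (poch (b+1) k * (b + 1 + INR k)).
  rewrite S_INR. replace (poch b k * (b + INR k) * (b + (INR k + 1))) with
    ((poch b k * (b + INR k)) * (b + (INR k + 1))) by ring.
  rewrite IHk. ring.
Qed.

Lemma coef_eq p k : 0 < p -> hyp2F1_coef 1 (1 + p) (2 + p) k = (1 + p) / (1 + p + INR k).
Proof.
  intros hp. unfold hyp2F1_coef. rewrite poch1.
  replace (2 + p) with ((1 + p) + 1) by ring.
  pose proof (poch_shift (1+p) k) as E.
  pose proof (poch_pos (1+p+1) k ltac:(lra)).
  pose proof (poch_pos (1+p) k ltac:(lra)).
  pose proof (pos_INR k).
  assert (INR (Factorial.fact k) <> 0) by (apply not_0_INR, Factorial.fact_neq_0).
  assert (E2 : poch (1 + p) k = (1 + p) * poch (1 + p + 1) k / (1 + p + INR k)).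
  { rewrite <- E. field. lra. }
  rewrite E2. field. repeat split; lra.
Qed.

Lemma cf0 p k : 0 < p -> cf p 0 k = (1 + p) / (1 + p + INR k).
Proof.
  intros hp. unfold cf.
  rewrite (RInt_ext _ (pw (p + INR k))).
  rewrite int_pw. field. pose proof (pos_INR k); lra.
  pose proof (pos_INR k); lra.
  intros x _. change (pw p x * (x ^ k / (1 - 0 * x) ^ S k) = pw (p + INR k) x). rewrite <- pw_mul_pow by auto. rewrite Rmult_0_l, Rminus_0_r, pow1. field.
Qed.

Lemma G_series p z : 0 < p -> -1 < z < 1 ->
  is_series (fun k => hyp2F1_coef 1 (1 + p) (2 + p) k * z ^ k) (G p z).
Proof.
  intros hp hz.
  assert (H := expand p 0 z hp ltac:(lra)).
  assert (hm : mm 0 = 1) by (unfold mm; rewrite Rminus_0_r, Rmin_left; lra).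
  rewrite hm in H. specialize (H ltac:(rewrite Rminus_0_r; apply Rabs_def1; lra)).
  eapply is_series_ext; [|exact H]. intros k. simpl. rewrite cf0, coef_eq by auto.
  rewrite Rminus_0_r. reflexivity.
Qed.

Lemma G_cont p : 0 < p -> is_hyp2F1_cont 1 (1 + p) (2 + p) (G p).
Proof. intros hp; split. apply G_analytic; auto. intros; apply G_series; auto. Qed.

Lemma radius_pos (a : nat -> R) h0 l : 0 < h0 -> is_series (fun k => a k * h0 ^ k) l ->
  Rbar_lt 0 (CV_radius a).
Proof.
  intros hh hs.
  assert (hl : is_lim_seq (fun k => a k * h0 ^ k) 0).
  { apply ex_series_lim_0. exists l; exact hs. }
  assert (hl2 : is_lim_seq (fun k => Rabs (a k * h0 ^ k)) 0).
  { apply is_lim_seq_abs_0 in hl. exact hl. }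
  apply is_lim_seq_Reals in hl2.
  assert (hb := cauchy_bound _ (CV_Cauchy _ (exist _ 0 hl2))).
  destruct hb as [M HM].
  destruct (CV_radius_bounded a) as [Hub _].
  apply Rbar_lt_le_trans with (Finite h0). simpl; auto.
  apply Hub. exists M. intros n. apply HM. exists n. reflexivity.
Qed.

Lemma cont_zero_right (f : R -> R) r : continuity_pt f 0 -> 0 < r ->
  (forall h, 0 < h < r -> f h = 0) -> f 0 = 0.
Proof.
  intros hc hr hz. apply NNPP. intros hne.
  assert (he : 0 < Rabs (f 0)) by (apply Rabs_pos_lt; auto).
  destruct (hc (Rabs (f 0)) he) as [del [hdel H]].
  set (h := Rmin (del/2) (r/2)).
  assert (0 < h) by (unfold h; apply Rmin_pos; lra).
  assert (h <= del / 2) by apply Rmin_l. assert (h <= r/2) by apply Rmin_r.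
  specialize (H h). simpl in H. unfold R_dist in H.
  rewrite hz in H by lra. rewrite Rminus_0_l, Rabs_Ropp, Rminus_0_r in H.
  assert (Rabs (f 0) < Rabs (f 0)). apply H. split. split. exact I. lra.
  rewrite Rabs_pos_eq; lra. lra.
Qed.

Lemma pseries_zero (n : nat) : forall (a : nat -> R) r, 0 < r -> Rbar_lt 0 (CV_radius a) ->
  (forall h, 0 < h < r -> PSeries a h = 0) -> a n = 0.
Proof.
  induction n; intros a r hr hrad hz.
  - rewrite <- PSeries_0. apply cont_zero_right with r; auto.
    apply PSeries_continuity. rewrite Rabs_R0; auto.
  - assert (a0 : a 0%nat = 0).
    { rewrite <- PSeries_0. apply cont_zero_right with r; auto.
      apply PSeries_continuity. rewrite Rabs_R0; auto. }
    change (a (S n)) with (PS_decr_1 a n).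
    apply IHn with r; auto. rewrite CV_radius_decr_1; auto.
    intros h hh. specialize (hz h hh). rewrite (PSeries_decr_1_aux a h a0) in hz.
    apply Rmult_integral in hz. destruct hz; [lra|auto].
Qed.

Definition Dsub (F1 F2 : R -> R) x := F1 x - F2 x.

Lemma analytic_sub D1 F1 F2 : real_analytic_on D1 F1 -> real_analytic_on D1 F2 ->
  real_analytic_on D1 (Dsub F1 F2).
Proof.
  intros h1 h2 x0 hx0.
  destruct (h1 x0 hx0) as [r1 [hr1 [c1 H1]]].
  destruct (h2 x0 hx0) as [r2 [hr2 [c2 H2]]].
  exists (Rmin r1 r2). split. apply Rmin_pos; auto.
  exists (fun k => c1 k - c2 k). intros x hx.
  assert (Rmin r1 r2 <= r1) by apply Rmin_l. assert (Rmin r1 r2 <= r2) by apply Rmin_r.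
  assert (S := is_series_minus _ _ _ _ (H1 x ltac:(lra)) (H2 x ltac:(lra))).
  eapply is_series_ext; [|exact S]. intros k. simpl. unfold plus, opp; simpl. ring.
Qed.

Lemma identity_thm (F1 F2 : R -> R) :
  real_analytic_on (fun z => z < 1) F1 -> real_analytic_on (fun z => z < 1) F2 ->
  (forall x, -1 < x < 1 -> F1 x = F2 x) -> forall z, z < 1 -> F1 z = F2 z.
Proof.
  intros h1 h2 hagree.
  set (D := Dsub F1 F2).
  assert (hD : real_analytic_on (fun z => z < 1) D) by (apply analytic_sub; auto).
  assert (hD0 : forall x, -1 < x < 1 -> D x = 0).
  { intros x hx. unfold D, Dsub. rewrite hagree; auto; ring. }
  set (P := fun t => forall x, t < x < 1 -> D x = 0).
  cut (forall z, z < 1 -> D z = 0).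
  { intros H z hz. specialize (H z hz). unfold D, Dsub in H. lra. }
  intros z0 hz0. apply NNPP. intros hne.
  set (E := fun s => P (- s)).
  assert (hbound : bound E).
  { exists (- z0). intros s hs. destruct (Rle_dec s (- z0)) as [h|h]; auto.
    exfalso. apply hne. apply hs. lra. }
  assert (hex : exists s, E s).
  { exists 1. intros x hx. apply hD0. lra. }
  destruct (completeness E hbound hex) as [M [HubM HleM]].
  assert (hM1 : 1 <= M). { apply HubM. intros x hx. apply hD0. lra. }
  assert (hMz : M <= - z0).
  { apply HleM. intros s hs. destruct (Rle_dec s (- z0)) as [h|h]; auto.
    exfalso. apply hne. apply hs. lra. }
  set (T := - M).
  assert (hPT : P T).
  { intros x hx. destruct (classic (exists s, E s /\ - x < s)) as [[s [hs hsx]]|hn].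
    - apply hs. lra.
    - exfalso. assert (M <= - x). { apply HleM. intros s hs.
        destruct (Rle_dec s (- x)); auto. exfalso; apply hn; exists s; split; auto; lra. }
      unfold T in hx. lra. }
  destruct (hD T ltac:(unfold T; lra)) as [r [hr [a Ha]]].
  set (r' := Rmin r (1 - T)).
  assert (hr' : 0 < r') by (unfold r', T; apply Rmin_pos; lra).
  assert (r' <= r) by apply Rmin_l. assert (r' <= 1 - T) by apply Rmin_r.
  assert (hrad : Rbar_lt 0 (CV_radius a)).
  { apply radius_pos with (h0 := r' / 2) (l := D (T + r'/2)). lra.
    specialize (Ha (T + r'/2) ltac:(rewrite Rabs_pos_eq; lra)).
    replace (T + r' / 2 - T) with (r'/2) in Ha by ring. exact Ha. }
  assert (ha0 : forall n, a n = 0).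
  { intros n. apply pseries_zero with r'; auto.
    intros h hh. unfold PSeries. 
    specialize (Ha (T + h) ltac:(rewrite Rabs_pos_eq; lra)).
    replace (T + h - T) with h in Ha by ring.
    rewrite (is_series_unique _ _ Ha). apply hPT. lra. }
  assert (hloc : forall x, Rabs (x - T) < r -> D x = 0).
  { intros x hx. specialize (Ha x hx).
    apply is_series_unique in Ha. rewrite <- Ha.
    rewrite <- (PSeries_const_0 (x - T)). unfold PSeries. apply Series_ext. intros k. rewrite ha0. ring. }
  assert (E (M + r/2)).
  { intros x hx. destruct (Rle_dec x T).
    - apply hloc. rewrite Rabs_left1 by lra. unfold T in *. lra.
    - apply hPT. lra. }
  assert (M + r/2 <= M) by (apply HubM; auto). lra.
Qed.

Lemma cont_unique a b c F1 F2 : is_hyp2F1_cont a b c F1 -> is_hyp2F1_cont a b c F2 ->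
  forall z, z < 1 -> F1 z = F2 z.
Proof.
  intros [h1 s1] [h2 s2]. apply identity_thm; auto.
  intros x hx. pose proof (is_series_unique _ _ (s1 x hx)) as e1.
  pose proof (is_series_unique _ _ (s2 x hx)) as e2. rewrite <- e1, <- e2. reflexivity.
Qed.

Section Integral.
Variables (sigma2 x2 x a1 a2 : R).
Hypotheses (hs : 0 < sigma2) (hx2 : 0 < x2)
  (ha1 : 0 < a1 < 1) (ha2 : 0 < a2 < 1).

Definition s_ := x ^ 2 + sigma2.
Definition t_ := x2 ^ 2 + sigma2.
Definition al_ := alpha sigma2 x2 x.
Definition c_ := / beta sigma2 x2 a1 a2.
Definition p_ := / al_.

Lemma s_pos : 0 < s_. Proof. unfold s_; pose proof (pow2_ge_0 x); lra. Qed.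
Lemma t_pos : 0 < t_. Proof. unfold t_; pose proof (pow2_ge_0 x2); lra. Qed.
Lemma al_pos : 0 < al_.
Proof.
  unfold al_, alpha. pose proof s_pos; pose proof t_pos. unfold s_, t_ in *.
  assert (0 < x2 ^ 2) by (apply pow_lt; auto).
  apply Rmult_lt_0_compat; apply Rdiv_lt_0_compat; lra.
Qed.
Lemma c_eq : c_ = a1 * t_ / (a2 * sigma2).
Proof. unfold c_, beta, t_. pose proof t_pos. unfold t_ in *. field. repeat split; lra. Qed.
Lemma c_pos : 0 < c_.
Proof. rewrite c_eq. pose proof t_pos. apply Rdiv_lt_0_compat; nra. Qed.
Lemma p_pos : 0 < p_. Proof. unfold p_. apply Rinv_0_lt_compat, al_pos. Qed.
Lemma alpha_over : al_ / s_ = x2 ^ 2 / (t_ * sigma2).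
Proof. unfold al_, alpha. fold s_ t_. pose proof s_pos; pose proof t_pos. field. lra. Qed.

Definition EE (Y : R) := exp (- Y ^ 2 / s_).
Definition hh (Y : R) := exp (- al_ * Y ^ 2 / s_).
Definition q_ (v : R) := pw p_ v * / (1 - - c_ * v).

Lemma pw_hh Y : pw p_ (hh Y) = EE Y.
Proof.
  unfold hh, EE. rewrite pw_pos by apply exp_pos. rewrite ln_exp. f_equal.
  unfold p_. pose proof al_pos. pose proof s_pos. field. lra.
Qed.

Lemma ln_id Y : ln (a1 / sigma2 * exp (- Y ^ 2 / sigma2) + a2 / (x2 ^ 2 + sigma2) * exp (- Y ^ 2 / (x2 ^ 2 + sigma2)))
  = ln (a2 / t_) + - Y ^ 2 / t_ + ln (1 + c_ * hh Y).
Proof.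
  fold t_. pose proof t_pos. pose proof c_pos. pose proof (exp_pos (- al_ * Y ^ 2 / s_)).
  assert (E : a1 / sigma2 * exp (- Y ^ 2 / sigma2) + a2 / t_ * exp (- Y ^ 2 / t_)
     = (a2 / t_) * exp (- Y ^ 2 / t_) * (1 + c_ * hh Y)).
  { assert (exp (- Y ^ 2 / sigma2) = exp (- Y ^ 2 / t_) * hh Y).
    { unfold hh. rewrite <- exp_plus. f_equal.
      replace (- al_ * Y ^ 2 / s_) with (- Y ^ 2 * (al_ / s_)) by (pose proof s_pos; field; lra).
      rewrite alpha_over. pose proof t_pos. unfold t_ in *. field. split; lra. }
    rewrite H2, c_eq. field. split; lra. }
  rewrite E. rewrite !ln_mult. rewrite ln_exp. ring.
  apply Rdiv_lt_0_compat; lra. apply exp_pos.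
  apply Rmult_lt_0_compat; [apply Rdiv_lt_0_compat; lra| apply exp_pos].
  unfold hh; nra.
Qed.

Definition Phi0 (Y : R) := ln (a2 / t_) * (1 - exp (- Y ^ 2 / s_))
  - (s_ / t_) * (1 - exp (- Y ^ 2 / s_) - (Y ^ 2 / s_) * exp (- Y ^ 2 / s_))
  - exp (- Y ^ 2 / s_) * ln (1 + c_ * exp (- al_ * Y ^ 2 / s_)) + ln (1 + c_).
Definition RR (a : R) := RInt q_ a 1.
Definition Phi (Y : R) := Phi0 Y - c_ * RR (hh Y).

Lemma q_cont v : 0 <= v -> continuous q_ v.
Proof.
  intros hv. pose proof c_pos. unfold q_.
  apply (continuous_mult (K:=R_AbsRing) (pw p_) (fun v => / (1 - - c_ * v))).
  apply pw_cont, p_pos.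
  apply (ex_derive_continuous (K:=R_AbsRing) (V:=R_NormedModule)). auto_derive. nra.
Qed.

Lemma RR_derive a : 0 < a -> is_derive RR a (- q_ a).
Proof.
  intros ha.
  apply is_derive_ext_loc with (f := fun b => - RInt q_ 1 b).
  - exists (mkposreal a ha). intros b hb. apply ballR1 in hb; cbn [pos] in hb.
    apply Rabs_def2 in hb. destruct hb as [hb1 hb2].
    unfold RR. rewrite <- (opp_RInt_swap (V:=R_CompleteNormedModule)). unfold opp; simpl; lra.
    apply (ex_RInt_continuous (V:=R_CompleteNormedModule)). intros z hz.
    apply q_cont. assert (Rmin b 1 > 0). { apply Rmin_glb_lt; try lra. }
    lra.
  - apply (is_derive_opp (K:=R_AbsRing) (V:=R_NormedModule) (fun b => RInt q_ 1 b)).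
    apply (is_derive_RInt (V:=R_NormedModule) q_ (fun b => RInt q_ 1 b) 1 a).
    + exists (mkposreal a ha). intros b hb. apply ballR1 in hb; cbn [pos] in hb.
      apply Rabs_def2 in hb. destruct hb as [hb1 hb2].
      apply (RInt_correct (V:=R_CompleteNormedModule)).
      apply (ex_RInt_continuous (V:=R_CompleteNormedModule)). intros z hz.
      apply q_cont. assert (Rmin 1 b > 0). { apply Rmin_glb_lt; try lra. }
      lra.
    + apply q_cont. lra.
Qed.


Lemma hh_derive Y : is_derive hh Y (- (2 * al_ * Y / s_) * hh Y).
Proof. unfold hh. pose proof s_pos. auto_derive. auto. replace (Y * (Y * 1)) with (Y ^ 2) by ring. unfold Rdiv. field. lra. Qed.

Definition D0 (Y : R) :=
  ln (a2 / t_) * (2 * Y / s_) * EE Y - (s_ / t_) * (Y ^ 2 / s_) * (2 * Y / s_) * EE Y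
  + (2 * Y / s_) * EE Y * ln (1 + c_ * hh Y)
  - EE Y * (c_ * (- (2 * al_ * Y / s_) * hh Y) / (1 + c_ * hh Y)).

Lemma Phi0_derive Y : is_derive Phi0 Y (D0 Y).
Proof.
  unfold Phi0, D0, EE, hh. pose proof s_pos. pose proof t_pos. pose proof c_pos.
  pose proof (exp_pos (- al_ * Y ^ 2 / s_)).
  auto_derive. replace (Y * (Y * 1)) with (Y ^ 2) by ring. unfold Rdiv in *. nra.
  replace (Y * (Y * 1)) with (Y ^ 2) by ring. unfold Rdiv in *.
  set (E := exp (- Y ^ 2 * / s_)). set (HH := exp (- al_ * Y ^ 2 * / s_)).
  assert (0 < HH) by apply exp_pos. field. repeat split; nra.
Qed.

Lemma Phi_derive Y : is_derive Phi Y (J_integrand sigma2 x2 a1 a2 x Y).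
Proof.
  assert (HR : is_derive (fun Y => RR (hh Y)) Y
     (scal (- (2 * al_ * Y / s_) * hh Y) (- q_ (hh Y)))).
  { apply (is_derive_comp (K:=R_AbsRing) (V:=R_NormedModule) RR hh).
    apply RR_derive. unfold hh; apply exp_pos. apply hh_derive. }
  assert (HP := is_derive_minus _ _ Y _ _ (Phi0_derive Y) (is_derive_scal _ Y c_ _ HR)).
  replace (J_integrand sigma2 x2 a1 a2 x Y) with
    (minus (D0 Y) (c_ * scal (- (2 * al_ * Y / s_) * hh Y) (- q_ (hh Y)))).
  eapply is_derive_ext; [|exact HP]. intros t. reflexivity.
  unfold J_integrand. rewrite ln_id. fold s_.
  unfold minus, plus, opp, scal; simpl. unfold mult; simpl.
  unfold D0, q_. rewrite pw_hh. fold (EE Y).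
  pose proof s_pos. pose proof t_pos. pose proof c_pos. assert (0 < hh Y) by (unfold hh; apply exp_pos).
  replace (exp (- (Y * (Y * 1)) / s_)) with (EE Y) by (unfold EE; f_equal; f_equal; ring). field. repeat split; nra.
Qed.


Lemma J_cont Y : continuous (J_integrand sigma2 x2 a1 a2 x) Y.
Proof.
  apply (ex_derive_continuous (K:=R_AbsRing) (V:=R_NormedModule)).
  unfold J_integrand. pose proof s_pos. pose proof t_pos. unfold s_, t_ in *.
  auto_derive. repeat split; try lra.
  apply Rplus_lt_0_compat; apply Rmult_lt_0_compat; try apply exp_pos;
    apply Rdiv_lt_0_compat; lra.
Qed.

Lemma Phi_zero : Phi 0 = 0.
Proof.
  unfold Phi, Phi0, RR, hh. replace (- al_ * 0 ^ 2 / s_) with 0 by (pose proof s_pos; field; lra).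
  replace (- 0 ^ 2 / s_) with 0 by (pose proof s_pos; field; lra).
  rewrite exp_0, RInt_point. unfold zero; simpl. rewrite !Rmult_1_r. field. pose proof s_pos; pose proof t_pos; split; lra.
Qed.

Lemma J_RInt Y : is_RInt (J_integrand sigma2 x2 a1 a2 x) 0 Y (Phi Y).
Proof.
  assert (H := is_RInt_derive Phi (J_integrand sigma2 x2 a1 a2 x) 0 Y).
  replace (Phi Y) with (minus (Phi Y) (Phi 0)).
  apply H. intros; apply Phi_derive. intros; apply J_cont.
  rewrite Phi_zero. unfold minus, plus, opp; simpl. ring.
Qed.


Lemma exp_small lam eta : 0 < lam -> 0 < eta -> exists U, 0 <= U /\ forall u, U <= u -> exp (- lam * u) < eta.
Proof.
  intros hl he. exists (Rabs (ln eta) / lam + 1). split.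
  pose proof (Rabs_pos (ln eta)). assert (0 <= Rabs (ln eta) / lam) by (apply Rdiv_le_0_compat; lra). lra.
  intros u hu. rewrite <- (exp_ln eta) by auto. apply exp_increasing.
  pose proof (Rle_abs (- ln eta)). rewrite Rabs_Ropp in H.
  assert (lam * u >= Rabs (ln eta) + lam).
  { apply Rmult_le_compat_l with (r := lam) in hu; [|lra].
    replace (lam * (Rabs (ln eta) / lam + 1)) with (Rabs (ln eta) + lam) in hu by (field; lra). lra. }
  lra.
Qed.

Lemma u_exp u : 0 <= u -> u * exp (- u) <= 2 * exp (- (1/2) * u).
Proof.
  intros hu. assert (h1 : u / 2 <= exp (u / 2)).
  { destruct (Req_dec (u/2) 0) as [e|e]. rewrite e, exp_0. lra.
    pose proof (exp_ineq1 (u/2) e). lra. }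
  replace (exp (- u)) with (exp (- (1/2) * u) * exp (- (1/2) * u)).
  2: { rewrite <- exp_plus. f_equal. field. }
  replace (exp (- (1/2) * u)) with (/ exp (u / 2)) at 1.
  2: { rewrite <- exp_Ropp. f_equal. field. }
  pose proof (exp_pos (u/2)). pose proof (exp_pos (- (1/2) * u)).
  apply Rmult_le_reg_l with (exp (u/2)). auto.
  replace (exp (u / 2) * (u * (/ exp (u / 2) * exp (- (1 / 2) * u)))) with (u * exp (- (1/2) * u)) by (field; lra).
  nra.
Qed.

Definition Lval := ln (a2 / t_) - s_ / t_ + ln (1 + c_) - c_ * RInt q_ 0 1.

Lemma q_bound v : 0 <= v <= 1 -> Rabs (q_ v) <= 1.
Proof.
  intros hv. unfold q_. pose proof c_pos. pose proof (pw_bnd p_ v p_pos ltac:(lra)).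
  rewrite Rabs_mult, Rabs_pos_eq by lra. rewrite Rabs_inv, Rabs_pos_eq by nra.
  assert (/ (1 - - c_ * v) <= 1).
  { rewrite <- Rinv_1. apply Rinv_le_contravar; nra. }
  assert (0 < / (1 - - c_ * v)) by (apply Rinv_0_lt_compat; nra). nra.
Qed.

Lemma Phi_lim eps : 0 < eps -> exists M, forall Y, M < Y -> Rabs (Phi Y - Lval) < eps.
Proof.
  intros he. pose proof s_pos. pose proof t_pos. pose proof c_pos. pose proof al_pos.
  set (K := Rabs (ln (a2 / t_)) + 3 * (s_ / t_) + ln (1 + c_)).
  assert (hK : 0 <= K).
  { unfold K. pose proof (Rabs_pos (ln (a2 / t_))).
    assert (0 <= ln (1 + c_)) by (rewrite <- ln_1; apply ln_le; lra).
    assert (0 <= s_ / t_) by (apply Rdiv_le_0_compat; lra). lra. }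
  destruct (exp_small (1/2) (eps / (2 * (K + 1))) ltac:(lra)) as [U1 [hU1 HU1]].
  { apply Rdiv_lt_0_compat; lra. }
  destruct (exp_small al_ (eps / (2 * (c_ + 1))) ltac:(lra)) as [U2 [hU2 HU2]].
  { apply Rdiv_lt_0_compat; lra. }
  set (U := Rmax U1 U2).
  assert (U1 <= U) by apply Rmax_l. assert (U2 <= U) by apply Rmax_r.
  exists (s_ * U + 1). intros Y hY.
  set (u := Y ^ 2 / s_).
  assert (hu : U <= u).
  { unfold u. assert (0 <= U) by lra. assert (1 <= Y) by nra.
    apply Rmult_le_reg_r with s_; auto. unfold Rdiv. rewrite Rmult_assoc, Rinv_l by lra. nra. }
  assert (hE : EE Y = exp (- u)) by (unfold EE, u; f_equal; field; lra).
  assert (hH : hh Y = exp (- al_ * u)) by (unfold hh, u; f_equal; field; lra).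
  assert (hEb : EE Y <= exp (- (1/2) * u)).
  { rewrite hE. assert (0 <= u) by lra. destruct (Req_dec u 0) as [e|e].
    right. rewrite e. f_equal. ring. left. apply exp_increasing. lra. }
  assert (e1 : exp (- (1/2) * u) < eps / (2 * (K + 1))) by (apply HU1; lra).
  assert (e2 : exp (- al_ * u) < eps / (2 * (c_ + 1))) by (apply HU2; lra).
  assert (huE : u * EE Y <= 2 * exp (- (1/2) * u)) by (rewrite hE; apply u_exp; lra).
  assert (hh01 : 0 < hh Y <= 1).
  { rewrite hH. split. apply exp_pos. rewrite <- exp_0. left; apply exp_increasing. 
    assert (hY1 : 1 < Y) by (assert (0 <= U) by lra; nra).
    assert (0 < u) by (unfold u; apply Rdiv_lt_0_compat; [apply pow_lt|]; lra). nra. }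
  assert (hL : 0 <= ln (1 + c_ * hh Y) <= ln (1 + c_)).
  { split. rewrite <- ln_1. apply ln_le; nra. apply ln_le; nra. }
  assert (hR : Rabs (RInt q_ 0 1 - RInt q_ (hh Y) 1) <= hh Y * 1).
  { apply RInt_tail. intros v hv. apply q_cont; lra. apply q_bound. lra. }
  assert (EQ : Phi Y - Lval = - ln (a2 / t_) * EE Y + (s_ / t_) * (EE Y + u * EE Y)
      - EE Y * ln (1 + c_ * hh Y) + c_ * (RInt q_ 0 1 - RInt q_ (hh Y) 1)).
  { unfold Phi, Phi0, Lval, RR. fold (EE Y) (hh Y). fold u. unfold Rdiv. ring_simplify. lra. }
  rewrite EQ.
  assert (hE0 : 0 < EE Y) by (unfold EE; apply exp_pos).
  pose proof (exp_pos (- (1/2) * u)).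
  assert (A1 : Rabs (- ln (a2 / t_) * EE Y) <= Rabs (ln (a2 / t_)) * exp (- (1/2) * u)).
  { rewrite Rabs_mult, Rabs_Ropp, (Rabs_pos_eq (EE Y)) by lra. apply Rmult_le_compat_l; auto. apply Rabs_pos. }
  assert (A2 : Rabs ((s_ / t_) * (EE Y + u * EE Y)) <= 3 * (s_ / t_) * exp (- (1/2) * u)).
  { assert (0 <= s_ / t_) by (apply Rdiv_le_0_compat; lra).
    assert (0 <= u) by lra. assert (0 <= u * EE Y) by (apply Rmult_le_pos; lra).
    rewrite Rabs_pos_eq by (apply Rmult_le_pos; lra).
    assert ((s_ / t_) * (EE Y + u * EE Y) <= (s_ / t_) * (3 * exp (- (1/2) * u))) by (apply Rmult_le_compat_l; lra).
    lra. }
  assert (A3 : Rabs (EE Y * ln (1 + c_ * hh Y)) <= ln (1 + c_) * exp (- (1/2) * u)).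
  { rewrite Rabs_pos_eq by (apply Rmult_le_pos; lra).
    rewrite (Rmult_comm (ln (1 + c_))). apply Rmult_le_compat; lra. }
  assert (A4 : Rabs (c_ * (RInt q_ 0 1 - RInt q_ (hh Y) 1)) <= c_ * exp (- al_ * u)).
  { rewrite Rabs_mult, Rabs_pos_eq by lra. rewrite <- hH. nra. }
  eapply Rle_lt_trans. apply Rabs_triang.
  eapply Rle_lt_trans. apply Rplus_le_compat_r. apply Rabs_triang.
  unfold Rminus at 1.
  eapply Rle_lt_trans. apply Rplus_le_compat_r. apply Rplus_le_compat_r. apply Rabs_triang.
  rewrite Rabs_Ropp.
  assert (B1 : K * exp (- (1/2) * u) <= eps / 2 * (K / (K + 1))).
  { unfold Rdiv in e1 |- *. rewrite Rinv_mult in e1. 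
    apply Rle_trans with (K * (eps * (/2 * / (K + 1)))). apply Rmult_le_compat_l; lra. 
    right. field. lra. }
  assert (B2 : c_ * exp (- al_ * u) <= eps / 2 * (c_ / (c_ + 1))).
  { unfold Rdiv in e2 |- *. rewrite Rinv_mult in e2.
    apply Rle_trans with (c_ * (eps * (/2 * / (c_ + 1)))). apply Rmult_le_compat_l; lra.
    right. field. lra. }
  assert (HK5 : K / (K + 1) < 1). { apply Rmult_lt_reg_r with (K + 1). lra. unfold Rdiv. rewrite Rmult_assoc, Rinv_l by lra. lra. }
  assert (HK6 : c_ / (c_ + 1) < 1). { apply Rmult_lt_reg_r with (c_ + 1). lra. unfold Rdiv. rewrite Rmult_assoc, Rinv_l by lra. lra. }
  assert (eps / 2 * (K / (K + 1)) < eps / 2) by (apply Rmult_lt_compat_l with (r := eps/2) in HK5; lra).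
  assert (eps / 2 * (c_ / (c_ + 1)) < eps / 2) by (apply Rmult_lt_compat_l with (r := eps/2) in HK6; lra).
  assert (KE : Rabs (ln (a2 / t_)) * exp (- (1/2) * u) + 3 * (s_ / t_) * exp (- (1/2) * u) + ln (1 + c_) * exp (- (1/2) * u) = K * exp (- (1/2) * u)) by (unfold K; ring). match goal with |- Rabs ?a + Rabs ?b + Rabs ?c + Rabs ?d < _ => assert (A4x : Rabs d <= c_ * exp (- al_ * u)) by exact A4; assert (A1x : Rabs a <= Rabs (ln (a2 / t_)) * exp (- (1/2) * u)) by exact A1; assert (A2x : Rabs b <= 3 * (s_ / t_) * exp (- (1/2) * u)) by exact A2;  assert (A3x : Rabs c <= ln (1 + c_) * exp (- (1/2) * u)) by exact A3 end. lra.
Qed.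

End Integral.

Lemma hyp_G p z : 0 < p -> z < 1 -> hyp2F1 1 (1 + p) (2 + p) z = G p z.
Proof.
  intros hp hz. unfold hyp2F1.
  apply (cont_unique 1 (1 + p) (2 + p)); auto.
  apply epsilon_spec. exists (G p). apply G_cont; auto.
  apply G_cont; auto.
Qed.

Theorem mainTheorem4 (sigma2 x2 x a1 a2 : R)
  (hs : 0 < sigma2) (hx2 : 0 < x2) (hx : 0 <= x)
  (ha1 : 0 < a1 < 1) (ha2 : 0 < a2 < 1) (hsum : a1 + a2 = 1) :
  let al := alpha sigma2 x2 x in
  let be := beta sigma2 x2 a1 a2 in
  is_RInt_gen (J_integrand sigma2 x2 a1 a2 x) (at_point 0) (Rbar_locally p_infty)
    (- ((x ^ 2 + sigma2) / (x2 ^ 2 + sigma2))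
     + ln (a2 / (x2 ^ 2 + sigma2))
     + ln (1 + / be)
     - (al * / be) / (al + 1)
       * hyp2F1 1 ((al + 1) / al) ((2 * al + 1) / al) (- / be)).
Proof.
  intros al be.
  pose proof (al_pos sigma2 x2 x hs hx2) as hal.
  pose proof (c_pos sigma2 x2 a1 a2 hs ha1 ha2) as hc.
  pose proof (p_pos sigma2 x2 x hs hx2) as hp.
  change (alpha sigma2 x2 x) with (al_ sigma2 x2 x) in al.
  assert (E1 : (al + 1) / al = 1 + p_ sigma2 x2 x) by (unfold al, p_; field; lra).
  assert (E2 : (2 * al + 1) / al = 2 + p_ sigma2 x2 x) by (unfold al, p_; field; lra).
  rewrite E1, E2.
  rewrite hyp_G by (auto; unfold be; fold (c_ sigma2 x2 a1 a2); lra).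
  set (l := - _ + _ + _ - _).
  assert (EL : l = Lval sigma2 x2 x a1 a2).
  { unfold l, Lval, G, be. fold (c_ sigma2 x2 a1 a2). fold (s_ x sigma2). fold (t_ x2 sigma2).
    unfold al. fold (q_ sigma2 x2 x a1 a2).
    unfold p_, s_, t_. assert (0 < x2 ^ 2 + sigma2) by (pose proof (pow2_ge_0 x2); lra). field. lra. }
  rewrite EL.
  intros P [eps HP].
  destruct (Phi_lim sigma2 x2 x a1 a2 hs hx2 ha1 ha2 eps (cond_pos eps)) as [M HM].
  apply Filter_prod with (Q := fun a => a = 0) (R := fun b => M < b).
  - reflexivity.
  - exists M. auto.
  - intros a b ha hb. subst a. simpl. exists (Phi sigma2 x2 x a1 a2 b). split.
    apply J_RInt; auto. apply HP. apply ballR2. apply HM; auto.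
Qed.
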